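(* Let $G$ be a finite cyclic group. Then $g(OD(G))=3$ if and only if $|G|$ is a composite number.
   Context: For a finite group $G$, $o(x)$ denotes the order of $x\in G$. The order-divisor graph $OD(G)$ is the simple undirected graph with vertex set $G$, in which two distinct vertices $x,y$ are adjacent if and only if $o(x)\neq o(y)$ and either $o(x)\mid o(y)$ or $o(y)\mid o(x)$. The girth $g(\Gamma)$ of a graph $\Gamma$ is the length of a shortest cycle in $\Gamma$ (taken to be $0$ if $\Gamma$ has no cycle). *)

(* Defs.v *)
From mathcomp Require Import all_boot all_fingroup all_solvable.
Set Implicit Arguments. Unset Strict Implicit. Unset Printing Implicit Defensive.

(* Simple graphs given by a vertex set A : {set T} and an adjacency relation e
   (assumed symmetric and irreflexive, as the order-divisor relation is). *)

Definition has_cycle_len (T : finType) (A : {set T}) (e : rel T) (k : nat) : bool :=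
  (3 <= k)%N && [exists t : k.-tuple T, [&& uniq t, all (mem A) t & path.cycle e t]].

(* Girth: length of a shortest cycle, 0 if there is none.  A cycle has
   distinct vertices, so its length is at most #|A|; we scan 3..#|A|. *)
Definition girth (T : finType) (A : {set T}) (e : rel T) : nat :=
  head 0 [seq k <- iota 3 (#|A| - 2) | has_cycle_len A e k].

Definition od_adj (gT : finGroupType) : rel gT :=
  fun x y => [&& x != y, #[x]%g != #[y]%g & (#[x]%g %| #[y]%g) || (#[y]%g %| #[x]%g)].

Definition composite (n : nat) : bool := (1 < n) && ~~ prime n.

(* Main.v *)
Require Import Defs.
From mathcomp Require Import all_boot all_fingroup all_solvable.
Set Implicit Arguments. Unset Strict Implicit. Unset Printing Implicit Defensive.

Lemma head_filter3 (P : pred nat) m :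
  head 0 [seq k <- iota 3 m | P k] = 3 -> P 3.
Proof.
case E: [seq k <- iota 3 m | P k] => [|a l] //= Ha.
have : a \in [seq k <- iota 3 m | P k] by rewrite E mem_head.
by rewrite mem_filter Ha => /andP[].
Qed.

Lemma ord_cases (gT : finGroupType) (G : {group gT}) (x : gT) :
  ~~ composite #|G| -> x \in G -> (#[x]%g == 1) || (#[x]%g == #|G|).
Proof.
move=> nc xG; have dx := order_dvdG xG.
move: nc; rewrite /composite negb_and -leqNgt negbK.
case/orP=> [le1|pr].
  have e1 : #|G| = 1 by apply/eqP; rewrite eqn_leq le1 cardG_gt0.
  by move: dx; rewrite e1 dvdn1 => ->.
by case/primeP: pr => _ /(_ _ dx).
Qed.

Theorem mainTheorem5 (gT : finGroupType) (G : {group gT}) :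
  cyclic G -> (girth G (@od_adj gT) = 3 <-> composite #|G|).
Proof.
move=> cG; split.
  move/head_filter3; rewrite /has_cycle_len /= => /existsP[t /and3P[ut att ct]].
  apply: contraLR isT => nc; exfalso.
  case: t ut att ct => [[|a [|b [|c [|d s]]]] //= _].
  rewrite !inE !andbT => _ /and3P[aG bG cG'] /and3P[eab ebc eca].
  move: eab ebc eca; rewrite /od_adj => /and3P[_ nab _] /and3P[_ nbc _] /and3P[_ nca _].
  move: (ord_cases nc aG) (ord_cases nc bG) (ord_cases nc cG') nab nbc nca.
  by case/orP=> /eqP->; case/orP=> /eqP->; case/orP=> /eqP->; rewrite ?eqxx.
move=> comp.
case/cyclicP: cG => x defG.
have on : #[x]%g = #|G| by rewrite defG.
move: comp; rewrite /composite => /andP[n1 np].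
set n := #|G| in on n1 np *.
set p := pdiv n.
have pp : prime p by rewrite /p pdiv_prime.
have pdn : p %| n by rewrite /p pdiv_dvd.
have p1 : 1 < p by apply: prime_gt1.
have n0 : 0 < n by apply: ltnW.
have pn : p != n by apply: contraNneq np => <-.
have ox : #[(x ^+ p)%g]%g = n %/ p by rewrite orderXdiv on.
have q1 : 1 < n %/ p.
  rewrite ltnNge; apply/negP => le.
  have : n %/ p * p = n by rewrite divnK.
  move: le; case: (n %/ p) => [|[|k]] //=.
    by rewrite mul0n => _ h; move: n0; rewrite -h.
  by rewrite mul1n => _ h; move: pn; rewrite h eqxx.
have qn : n %/ p < n by rewrite ltn_Pdiv.
have xG : x \in G by rewrite defG cycle_id.
have xpG : (x ^+ p)%g \in G by rewrite groupX.
have H3 : has_cycle_len G (@od_adj gT) 3.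
  rewrite /has_cycle_len /=; apply/existsP.
  exists [tuple 1%g; (x ^+ p)%g; x].
  have a1 : od_adj 1%g ((x ^+ p)%g).
    rewrite /od_adj order1 ox dvd1n andbT.
    rewrite neq_ltn q1 andbT; apply/eqP => h; move: q1; by rewrite -ox -h order1.
  have a2 : od_adj ((x ^+ p)%g) x.
    rewrite /od_adj ox on (neq_ltn (n %/ p)) qn dvdn_div // /= !andbT.
    apply/eqP => h; move: qn; by rewrite -ox h on ltnn.
  have a3 : od_adj x 1%g.
    rewrite /od_adj order1 on dvd1n orbT andbT neq_ltn n1 orbT andbT.
    apply/eqP => h; move: n1; by rewrite -on h order1.
  rewrite /= !inE !andbT xpG xG group1 a1 a2 a3 /= andbT.
  have nx : x != 1%g by apply/eqP => h; move: n1; rewrite -on h order1.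
  have nxp : (x ^+ p)%g != x by apply/eqP => h; move: qn; rewrite -ox h on ltnn.
  have n1p : 1%g != (x ^+ p)%g by apply/eqP => h; move: q1; rewrite -ox -h order1.
  by rewrite negb_or n1p eq_sym nx nxp.
rewrite /girth.
have : 3 <= n.
  rewrite ltnNge; apply/negP => le; have e : n = 2 by apply/eqP; rewrite eqn_leq le n1.
  by move: np; rewrite e.
rewrite -/n; case E: (n - 2) => [|m] le3; first by move/eqP: E; rewrite subn_eq0 leqNgt le3.
by rewrite /= H3.
Qed.
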